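(* For $N\in\mathbb{N}$, let $\pi_N$ be the law of the number of fixed points of a uniformly random permutation of $\{1,\dots,N\}$, and let $\mathcal{P}$ be the Poisson law on $\mathbb{Z}_+=\{0,1,2,\dots\}$ with parameter $1$. Then $$\lim_{N\to\infty}\frac{1}{N\ln N}\,\ln\big(\|\pi_N-\mathcal{P}\|_{\mathrm{tv}}\big)=-1 .$$
   Context: For probability measures $\mu,\mu'$ on $\mathbb{Z}_+$, $\|\mu-\mu'\|_{\mathrm{tv}}=\sup_{A\subset\mathbb{Z}_+}|\mu(A)-\mu'(A)|=\sum_{n}(\mu(n)-\mu'(n))_+$. *)

(* Defs.v *)
From HB Require Import structures.
From mathcomp Require Import all_boot all_order all_algebra all_fingroup.
From mathcomp Require Import all_classical all_reals all_analysis.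
Set Implicit Arguments. Unset Strict Implicit. Unset Printing Implicit Defensive.
Import Order.TTheory GRing.Theory Num.Theory.
Import numFieldNormedType.Exports.
Local Open Scope ring_scope.

Definition nfix (N : nat) (s : 'S_N) : nat := #|[set i : 'I_N | s i == i]|.

Definition piN (R : realType) (N k : nat) : R :=
  (#|[set s : 'S_N | nfix s == k]|)%:R / (N`!)%:R.

Definition poisson1 (R : realType) (k : nat) : R := expR (-1) / (k`!)%:R.

(* total variation distance: sum_n (pi_N(n) - P(n))_+  (series over all n) *)
Definition tv_piN_poisson (R : realType) (N : nat) : R :=
  limn (series (fun n : nat => Num.max (piN R N n - poisson1 R n) 0)).

(* Main.v *)
Require Import Defs.
From HB Require Import structures.
From mathcomp Require Import all_boot all_order all_algebra all_fingroup.
From mathcomp Require Import all_classical all_reals all_analysis.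
From mathcomp Require Import ring lra.
Import Order.TTheory GRing.Theory Num.Theory.
Import numFieldNormedType.Exports.
Local Open Scope ring_scope.

Lemma sum_bin_nfix N j :
  (\sum_(s : 'S_N) 'C(nfix s, j) = 'C(N, j) * (N - j)`!)%N.
Proof.
have E s : 'C(nfix s, j) = (\sum_(B : {set 'I_N} | #|B| == j)
                               (B \subset [set i | s i == i]))%N.
  rewrite /nfix -cards_draws -sum1_card big_mkcond /= [RHS]big_mkcond /=.
  apply: eq_bigr => B _; rewrite inE andbC.
  by case: (_ == j); case: (_ \subset _).
rewrite (eq_bigr _ (fun s _ => E s)) exchange_big /=.
rewrite (eq_bigr (fun _ => (N - j)`!)); last first.
  move=> B /eqP HB.
  rewrite -big_mkcond /= sum1_card.
  have -> : #|[pred s : 'S_N | B \subset [set i | s i == i]]| = #|perm_on (~: B)|.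
    apply: eq_card => s; rewrite !inE /perm_on.
    change ((B \subset [set i | s i == i]) = ([pred x | s x != x] \subset ~: B)); apply/fintype.subsetP/fintype.subsetP => H x.
      rewrite !inE => hx; apply/negP => xB; move: (H x xB); rewrite inE.
      by rewrite (negbTE hx).
    move=> xB; rewrite inE; apply/negPn/negP => hx.
    by move: (H x hx); rewrite inE xB.
  by rewrite card_perm cardsCs finset.setCK card_ord HB.
have := card_draws ('I_N) j; rewrite card_ord => <-. rewrite sum_nat_const; congr (_ * _)%N; apply: eq_card => B; by rewrite inE.
Qed.
Lemma gid (R : realType) m k :
  \sum_(j < m.+1) (-1)^+j * ('C(j,k))%:R * ('C(m,j))%:R
   = (-1)^+k * ((m == k)%:R : R).
Proof.
elim: m k => [|m IH] k.
  rewrite big_ord1 /= expr0 bin0 mul1r mulr1 bin0n.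
  by case: k => [|k] //=; rewrite ?mulr0 ?expr0 ?mulr1.
rewrite big_ord_recl /= bin0.
under eq_bigr => j _ do rewrite binS natrD mulrDr.
rewrite big_split /= addrA.
have S1 : \sum_(j < m.+2) (-1)^+j * ('C(j,k))%:R * ('C(m,j))%:R
           = (-1)^+k * ((m == k)%:R : R).
  by rewrite big_ord_recr /= (@bin_small m m.+1) // mulr0 addr0 IH.
rewrite big_ord_recl /= bin0 in S1.
rewrite S1.
case: k IH S1 => [|k] IH S1.
  under eq_bigr => j _ do rewrite !bin0 exprS mulN1r !mulNr.
  rewrite sumrN.
  have E0 : \sum_(j < m.+1) (-1)^+j * 1 * ('C(m,j))%:R = (-1)^+0 * ((m == 0%N)%:R : R).
    by rewrite -(IH 0%N); apply: eq_bigr => j _; rewrite bin0.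
  by rewrite E0 subrr /= mulr0.
under eq_bigr => j _ do rewrite (_ : bump 0 j = j.+1) // binS natrD mulrDr mulrDl exprS mulN1r !mulNr.
rewrite big_split /= !sumrN IH IH /=.
rewrite eqSS exprS. 
case: (m == k.+1); case: (m == k); rewrite ?mulr0 ?mulr1 ?oppr0 ?addr0 ?subr0 ?add0r ?sub0r ?mulN1r //=;
 ring.
Qed.

Lemma gidN (R : realType) N m k : (m <= N)%N ->
  ((m == k)%:R : R) =
  (-1)^+k * \sum_(j < N.+1) (-1)^+j * ('C(j,k))%:R * ('C(m,j))%:R.
Proof.
move=> mN.
set F := (fun j : nat => (-1)^+j * ('C(j,k))%:R * ('C(m,j))%:R : R).
have E : \sum_(j < N.+1) F j = \sum_(j < m.+1) F j.
  rewrite [RHS](big_ord_widen N.+1 F (_ : m.+1 <= N.+1)%N) // big_mkcond /=.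
  rewrite [RHS]big_mkcond; apply: eq_bigr => j _; case: ifP => // /negbT; rewrite -leqNgt => h.
  by rewrite /F (@bin_small m j) // mulr0.
rewrite E /F gid mulrA -exprMn mulrNN mulr1 expr1n mul1r //.
Qed.

Lemma nfix_le N (s : 'S_N) : (nfix s <= N)%N.
Proof. by have := max_card [set i | s i == i]; rewrite card_ord. Qed.

Lemma fact_neq0 (R : realType) n : (n`!%:R : R) != 0.
Proof. by rewrite pnatr_eq0 -lt0n fact_gt0. Qed.

Lemma piN_formula (R : realType) N k :
  piN R N k = (-1)^+k * \sum_(j < N.+1) (-1)^+j * ('C(j,k))%:R / (j`!)%:R.
Proof.
rewrite /piN.
have -> : #|[set s : 'S_N | nfix s == k]| = (\sum_(s : 'S_N) (nfix s == k))%N.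
  by rewrite -sum1_card big_mkcond /=; apply: eq_bigr => s _; rewrite inE; case: (_ == _).
rewrite natr_sum.
rewrite (eq_bigr _ (fun (s : 'S_N) _ => @gidN R N (nfix s) k (@nfix_le N s))).
rewrite -mulr_sumr exchange_big /= -mulrA mulr_suml; congr (_ * _).
apply: eq_bigr => j _.
rewrite -mulr_sumr -!natr_sum -mulrA sum_bin_nfix.
have jN : (j <= N)%N by rewrite -ltnS ltn_ord.
have F := bin_fact jN.
have -> : (('C(N, j) * (N - j)`!)%:R : R) = (N`!)%:R / (j`!)%:R.
  rewrite -F !natrM; field; rewrite fact_neq0 //.
field; rewrite !fact_neq0 //.
Qed.

Lemma piN_series (R : realType) N k : (k <= N)%N ->
  piN R N k = (k`!%:R)^-1 * series (exp_coeff (-1 : R)) (N - k).+1.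
Proof.
move=> kN; rewrite piN_formula -(big_mkord xpredT (fun j => (-1)^+j * ('C(j,k))%:R / (j`!)%:R : R)).
rewrite (@big_cat_nat _ _ _ k) //=; last by rewrite (leq_trans kN).
rewrite big_nat_cond big1 ?add0r; last first.
  by move=> i /andP[/andP[_ ik] _]; rewrite bin_small // mulr0 mul0r.
rewrite (big_addn 0 N.+1 k) subSn // /series /= mulr_sumr mulr_sumr.
apply: eq_bigr => i _.
have F := bin_fact (leq_addl i k).
rewrite addnK in F.
have s : (-1)^+k * (-1)^+k = 1 :> R by rewrite -exprMn mulrNN mulr1 expr1n.
transitivity (((-1 : R)^+k * (-1)^+k) * ((-1)^+i * ('C(i + k, k))%:R / ((i + k)`!)%:R)).
  by rewrite exprD; ring.
rewrite s mul1r /exp_coeff /=.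
have -> : (('C(i + k, k))%:R : R) = ((i+k)`!)%:R / (k`! * i`!)%:R.
  by rewrite -F natrM; field; rewrite ?natrM ?mulf_neq0 // ?fact_neq0.
rewrite natrM; field. rewrite !fact_neq0 //.
Qed.

Lemma piN_gt (R : realType) N k : (N < k)%N -> piN R N k = 0.
Proof.
move=> Nk; rewrite piN_formula big1 ?mulr0 // => j _.
by rewrite bin_small ?mulr0 ?mul0r // (leq_trans _ Nk) // -ltnS ltn_ord.
Qed.

Lemma fact_pow2 m i : (m < i)%N -> (m`! * 2 ^ i <= i`! * 2 ^ m.+1)%N.
Proof.
elim: i => [//|i IH]; rewrite ltnS leq_eqVlt => /orP[/eqP <-|mi].
  rewrite leq_mul2r factS leq_pmull ?fact_gt0 //; apply/orP; right; done.
rewrite expnS factS mulnCA -mulnA (leq_trans (leq_mul (leqnn 2) (IH mi))) //.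
by rewrite leq_mul2r ltnS (leq_trans _ mi) ?orbT.
Qed.

Lemma geo_sum (R : realType) a b : (a <= b)%N ->
  \sum_(a <= i < b) (2^-1 : R)^+i = 2 * (2^-1)^+a - 2 * (2^-1)^+b.
Proof.
elim: b => [|b IH]; first by rewrite leqn0 => /eqP ->; rewrite big_geq // subrr.
rewrite leq_eqVlt => /orP[/eqP ->|ab]; first by rewrite big_geq // subrr.
rewrite big_nat_recr //= IH // exprS; by field.
Qed.

Lemma tail_bound (R : realType) m M : (m < M)%N ->
  `| series (exp_coeff (-1 : R)) M - series (exp_coeff (-1 : R)) m.+1 | <= 2 / (m`!)%:R.
Proof.
move=> mM.
rewrite /series /= (@big_cat_nat _ _ _ m.+1 0 M) //= addrAC subrr add0r.
apply: (le_trans (ler_norm_sum _ _ _)).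
apply: (@le_trans _ _ (\sum_(m.+1 <= i < M) (2 ^+ m.+1 / (m`!)%:R) * (2^-1)^+i)).
  rewrite big_nat_cond [X in _ <= X]big_nat_cond.
  apply: ler_sum => i /andP[/andP[mi _] _].
  rewrite /exp_coeff /= normrM normrX normrN normr1 expr1n mul1r.
  rewrite normfV ger0_norm // exprVn.
  have := @fact_pow2 m i mi; rewrite -(ler_nat R) !natrM !natrX => H.
  rewrite -div1r ler_pdivrMr ?ltr0n ?fact_gt0 // mulrAC ler_pdivlMr ?exprn_gt0 //.
  rewrite mulrAC ler_pdivlMr ?ltr0n ?fact_gt0 // mul1r.
  by rewrite mulrC (mulrC _ (i`!%:R)).
rewrite -mulr_sumr geo_sum // mulrBr.
have -> : (2 : R) ^+ m.+1 / (m`!)%:R * (2 * (2^-1)^+m.+1) = 2 / (m`!)%:R.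
  rewrite exprVn; field; rewrite fact_neq0 expf_neq0 //.
rewrite gerBl // mulr_ge0 // ?mulr_ge0 // ?divr_ge0 // ?exprn_ge0 //.
Qed.

Local Open Scope classical_set_scope.

Lemma exp_tail (R : realType) m :
  `| series (exp_coeff (-1 : R)) m.+1 - expR (-1) | <= 2 / (m`!)%:R.
Proof.
have H : \forall n \near \oo,
   `| series (exp_coeff (-1 : R)) n - series (exp_coeff (-1 : R)) m.+1 | <= 2 / (m`!)%:R.
  by exists m.+1 => // n /= hn; apply: tail_bound.
rewrite distrC ler_distl; apply/andP; split.
  apply: limr_ge; first exact: is_cvg_series_exp_coeff.
  by apply: filterS H => n; rewrite ler_distl => /andP[].
apply: limr_le; first exact: is_cvg_series_exp_coeff.
by apply: filterS H => n; rewrite ler_distl => /andP[].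
Qed.

Definition tterm (R : realType) N n : R := Num.max (piN R N n - poisson1 R n) 0.

Lemma poisson_gt0 (R : realType) n : 0 < poisson1 R n.
Proof. by rewrite /poisson1 divr_gt0 ?expR_gt0 // ltr0n fact_gt0. Qed.

Lemma tterm_ge0 (R : realType) N n : 0 <= tterm R N n.
Proof. by rewrite /tterm le_max lexx orbT. Qed.

Lemma tv_eq (R : realType) N :
  tv_piN_poisson R N = \sum_(n < N.+1) tterm R N n.
Proof.
rewrite /tv_piN_poisson; apply: lim_near_cst => //.
exists N.+1 => // M /= hM.
rewrite /series /= (@big_cat_nat _ _ _ N.+1 0 M) //= big_mkord.
rewrite [X in _ + X](_ : _ = 0) ?addr0 //.
rewrite big_nat_cond big1 // => n /andP[/andP[Nn _] _].
rewrite piN_gt // sub0r max_r //.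
by rewrite oppr_le0 ltW ?poisson_gt0.
Qed.

Lemma tterm_le (R : realType) N n : (n <= N)%N ->
  tterm R N n <= 2 * ('C(N, n))%:R / (N`!)%:R.
Proof.
move=> nN.
apply: (@le_trans _ _ `|piN R N n - poisson1 R n|).
  by rewrite /tterm ge_max ler_norm normr_ge0.
rewrite piN_series // /poisson1 (mulrC (expR _)) -mulrBr.
rewrite normrM ger0_norm ?invr_ge0 ?ler0n //.
have := exp_tail R (N - n).
have F := bin_fact nN.
have -> : (('C(N, n))%:R : R) = (N`!)%:R / (n`! * (N - n)`!)%:R.
  by rewrite -F natrM; field; rewrite ?natrM ?mulf_neq0 // ?fact_neq0.
move=> H.
rewrite (le_trans (ler_wpM2l _ H)) ?invr_ge0 ?ler0n // natrM.
rewrite le_eqVlt; apply/orP; left; apply/eqP; field.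
by rewrite !fact_neq0.
Qed.

Lemma sum_binN N : (\sum_(n < N.+1) 'C(N, n) = 2 ^ N)%N.
Proof.
have := expnDn 1 1 N; rewrite addn1 => ->.
by apply: eq_bigr => i _; rewrite !exp1n !muln1.
Qed.

Lemma tv_upper (R : realType) N :
  tv_piN_poisson R N <= 2 * (2 : R)^+N / (N`!)%:R.
Proof.
rewrite tv_eq.
apply: (@le_trans _ _ (\sum_(n < N.+1) 2 * ('C(N, n))%:R / (N`!)%:R)).
  by apply: ler_sum => n _; apply: tterm_le; rewrite -ltnS ltn_ord.
rewrite -mulr_suml -mulr_sumr -natr_sum sum_binN natrX.
by rewrite le_eqVlt eqxx.
Qed.

Lemma tv_lower (R : realType) N :
  (1 - expR (-1)) / (N`!)%:R <= tv_piN_poisson R N.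
Proof.
rewrite tv_eq big_ord_recr /= -[X in X <= _]add0r.
apply: lerD; first by apply: sumr_ge0 => i _; exact: tterm_ge0.
rewrite /tterm le_max; apply/orP; left.
rewrite piN_series // subnn /series /= big_nat1 /exp_coeff /= expr0 /poisson1.
rewrite le_eqVlt; apply/orP; left; apply/eqP.
by rewrite fact0 divr1 mulr1 mulrBl mul1r.
Qed.

Lemma fact_le_pow n : (n`! <= n ^ n)%N.
Proof.
elim: n => [//|n IH]; rewrite factS expnS leq_mul2l /=.
apply: (leq_trans IH); case: n {IH} => [//|n].
by rewrite leq_exp2r.
Qed.

Lemma lnfact_le (R : realType) N : (1 <= N)%N ->
  ln ((N`!)%:R : R) <= N%:R * ln (N%:R : R).
Proof.
move=> N1.
have H : ((N`!)%:R : R) <= (N%:R)^+N by rewrite -natrX ler_nat fact_le_pow.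
rewrite mulr_natl -lnXn ?ltr0n // ler_ln // posrE ?ltr0n ?fact_gt0 //.
by rewrite exprn_gt0 // ltr0n.
Qed.

Lemma lnfact_ge (R : realType) N : (1 <= N)%N ->
  N%:R * ln (N%:R : R) - N%:R <= ln ((N`!)%:R : R).
Proof.
case: N => [//|n] _.
have H := @expR_ge1Dxn R (n.+1)%:R n (ler0n _ _).
have H2 : (n.+1%:R : R) ^+ n.+1 / (n.+1`!)%:R <= expR (n.+1)%:R.
  by apply: le_trans H; rewrite lerDr.
have P1 : (0 : R) < (n.+1%:R) ^+ n.+1 / (n.+1`!)%:R.
  by rewrite divr_gt0 // ?exprn_gt0 ?ltr0n ?fact_gt0.
have := H2; rewrite -ler_ln ?posrE ?expR_gt0 // expRK ln_div ?posrE ?exprn_gt0 ?ltr0n ?fact_gt0 //.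
rewrite lnXn ?ltr0n // -(mulr_natl (ln _) n.+1).
move=> h; lra.
Qed.

Lemma key_bound (R : realType) N : (2 <= N)%N ->
  `| -1 - ln (tv_piN_poisson R N) / (N%:R * ln (N%:R : R)) |
    <= (2 * ln (2 : R) + 1 - ln (1 - expR (-1))) / ln (N%:R : R).
Proof.
move=> N2.
set T := ln (tv_piN_poisson R N).
set L := ln ((N`!)%:R : R).
set l := ln (N%:R : R).
set n := (N%:R : R).
set c0 := ln (1 - expR (-1 : R)).
set c1 := ln (2 : R).
have n2 : 2 <= n by rewrite /n (ler_nat R 2 N).
have l0 : 0 < l by rewrite /l ln_gt0 // (lt_le_trans _ n2) // ltr1n.
have e1 : expR (-1 : R) < 1 by rewrite expR_lt1 ltrN10.
have e0 : 0 < 1 - expR (-1 : R) by rewrite subr_gt0.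
have c00 : c0 < 0 by rewrite /c0 ln_lt0 // e0 /= gtrBl expR_gt0.
have c10 : 0 < c1 by rewrite /c1 ln_gt0 // ltr1n.
have F0 : (0 : R) < (N`!)%:R by rewrite ltr0n fact_gt0.
have hlow := tv_lower R N.
have tv0 : 0 < tv_piN_poisson R N by apply: lt_le_trans hlow; rewrite divr_gt0.
have hTl : c0 - L <= T.
  rewrite /c0 /L -ln_div ?posrE // /T ler_ln ?posrE ?divr_gt0 //.
have hTu : T <= c1 + n * c1 - L.
  have hu := tv_upper R N.
  rewrite /T (le_trans (_ : _ <= ln (2 * 2 ^+ N / (N`!)%:R))) //.
    by rewrite ler_ln ?posrE // divr_gt0 // mulr_gt0 // exprn_gt0.
  rewrite ln_div ?posrE ?mulr_gt0 ?exprn_gt0 // lnM ?posrE ?exprn_gt0 // lnXn //.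
  by rewrite /c1 /L /n mulr_natl.
have hL1 : L <= n * l by apply: lnfact_le; rewrite (leq_trans _ N2).
have hL2 : n * l - n <= L by apply: lnfact_ge; rewrite (leq_trans _ N2).
have nl0 : 0 < n * l by rewrite mulr_gt0 // (lt_le_trans _ n2).
have -> : -1 - T / (n * l) = - ((T + n * l) / (n * l)).
  by field; rewrite gt_eqF // gt_eqF // (lt_le_trans _ n2).
rewrite normrN normrM (@gtr0_norm _ (n * l)^-1) ?invr_gt0 //.
rewrite ler_pdivrMr // (_ : (2 * c1 + 1 - c0) / l * (n * l) = (2 * c1 + 1 - c0) * n); last by field; rewrite gt_eqF.
rewrite ler_norml; apply/andP; split; nra.
Qed.

Theorem mainTheorem1 (R : realType) :
  (fun N : nat => ln (tv_piN_poisson R N) / (N%:R * ln (N%:R : R)))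
    @ \oo --> (-1 : R).
Proof.
set K := (2 * ln (2 : R) + 1 - ln (1 - expR (-1))).
have K0 : 0 < K.
  have e1 : expR (-1 : R) < 1 by rewrite expR_lt1 ltrN10.
  have e0 : 0 < 1 - expR (-1 : R) by rewrite subr_gt0.
  have c00 : ln (1 - expR (-1 : R)) < 0 by rewrite ln_lt0 // e0 /= gtrBl expR_gt0.
  have c10 : 0 < ln (2 : R) by rewrite ln_gt0 // ltr1n.
  rewrite /K; lra.
apply/cvgrPdist_le => e e0.
exists (maxn 2 (Num.Def.trunc (expR (K / e))).+1) => // N /=.
rewrite geq_max => /andP[N2 NT].
have H := @key_bound R N N2. apply: (le_trans H).
have l0 : 0 < ln (N%:R : R) by rewrite ln_gt0 // ltr1n.
rewrite -/K ler_pdivrMr // -ler_pdivrMl //.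
rewrite mulrC -[X in X <= _](expRK (K / e)) ler_ln ?posrE ?expR_gt0 ?ltr0n ?(leq_trans _ N2) //.
apply: ltW; apply: (lt_le_trans (truncnS_gt _)).
by rewrite ler_nat.
Qed.
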